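(* (1) For every subset $R\subseteq B$: if $R$ is top terminating relative to $T$, then $R$ is terminating relative to $T$. (2) For every subset $Q\subseteq D_T$: if $\overline{Q}$ is top terminating relative to $\overline{T}$, then $\overline{Q}$ is terminating relative to $\overline{T}$.
   Context: For an SRS $R$ over $\Sigma$, $\to_R=\{(u\ell v,urv): u,v\in\Sigma^*, \ell\to r\in R\}$ and the top rewrite relation is $\to_{R_{\mathrm{top}}}=\{(\ell v,rv): v\in\Sigma^*,\ell\to r\in R\}$. For relations $\to_1,\to_2$, ''$\to_1$ is terminating relative to $\to_2$'' means there is no infinite sequence $s_0,s_1,\dots$ with $s_i\to_1 s_{i+1}$ for infinitely many $i$ and $s_i\to_2 s_{i+1}$ for all other $i$. ''$R$ terminating relative to $S$'' refers to $\to_R$ vs $\to_S$; ''$R$ top terminating relative to $S$'' refers to $\to_{R_{\mathrm{top}}}$ vs $\to_S$. The reversal of a string $s_1\cdots s_n$ is $s_n\cdots s_1$ and $\overline{R}=\{\overline{\ell}\to\overline{r}:\ell\to r\in R\}$. Alphabet $\{0_2,1_2,0_3,1_3,2_3,\lhd,\rhd\}$; $D_T=\{0_2\rhd\to\rhd,\ 1_2\rhd\to 2_3\rhd\}$; $A=\{0_20_3\to0_30_2,\ 0_21_3\to0_31_2,\ 0_22_3\to1_30_2,\ 1_20_3\to1_31_2,\ 1_21_3\to2_30_2,\ 1_22_3\to2_31_2\}$; $B=\{\lhd0_3\to\lhd1_2,\ \lhd1_3\to\lhd0_20_2,\ \lhd2_3\to\lhd0_21_2\}$; $T=D_T\cup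 A\cup B$. *)

(* Defs.v *)
From Stdlib Require Import List.
Import ListNotations.

(* The alphabet {0_2,1_2,0_3,1_3,2_3,<|,|>}. *)
Inductive sym : Type := s02 | s12 | s03 | s13 | s23 | lhd | rhd.

Definition word := list sym.
Definition rule := (word * word)%type.
Definition srs := rule -> Prop.

Definition subsrs (R S : srs) : Prop := forall p, R p -> S p.

Definition rstep (R : srs) (s t : word) : Prop :=
  exists u v l r, R (l, r) /\ s = u ++ l ++ v /\ t = u ++ r ++ v.

Definition topstep (R : srs) (s t : word) : Prop :=
  exists v l r, R (l, r) /\ s = l ++ v /\ t = r ++ v.

Definition rel_terminating (step1 step2 : word -> word -> Prop) : Prop :=
  ~ exists f : nat -> word,
      (forall i, step1 (f i) (f (S i)) \/ step2 (f i) (f (S i))) /\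
      (forall n, exists i, n <= i /\ step1 (f i) (f (S i))).

Definition terminating_rel (R S : srs) : Prop := rel_terminating (rstep R) (rstep S).
Definition top_terminating_rel (R S : srs) : Prop := rel_terminating (topstep R) (rstep S).

Definition rev_srs (R : srs) : srs :=
  fun p => exists l r, R (l, r) /\ p = (rev l, rev r).

Definition D_T : srs := fun p =>
  p = ([s02; rhd], [rhd]) \/ p = ([s12; rhd], [s23; rhd]).

Definition A_rules : srs := fun p =>
  p = ([s02; s03], [s03; s02]) \/
  p = ([s02; s13], [s03; s12]) \/
  p = ([s02; s23], [s13; s02]) \/
  p = ([s12; s03], [s13; s12]) \/
  p = ([s12; s13], [s23; s02]) \/
  p = ([s12; s23], [s23; s12]).

Definition B_rules : srs := fun p =>
  p = ([lhd; s03], [lhd; s12]) \/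
  p = ([lhd; s13], [lhd; s02; s02]) \/
  p = ([lhd; s23], [lhd; s02; s12]).

Definition T_rules : srs := fun p => D_T p \/ A_rules p \/ B_rules p.

(* Main.v *)
Require Import Defs.
From Stdlib Require Import List Lia Classical ClassicalEpsilon.
Import ListNotations.

Definition sym_eq_dec : forall x y : sym, {x=y}+{x<>y}. decide equality. Defined.

Fixpoint seg_from (c:sym) (w:word) : word :=
  match w with [] => [] | x::w' => if sym_eq_dec x c then [] else x :: seg_from c w' end.
Fixpoint seg (c:sym) (j:nat) (w:word) : word :=
  match w with [] => []
  | x::w' => if sym_eq_dec x c then match j with 0 => c :: seg_from c w' | S j' => seg c j' w' end
             else seg c j w' end.
Definition cnt c w := count_occ sym_eq_dec w c.

Lemma seg_from_cfree c m v : ~ In c m -> seg_from c (m ++ v) = m ++ seg_from c v.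
Proof. induction m; simpl; intros H; auto.
 destruct (sym_eq_dec a c); [subst; tauto|]. rewrite IHm; auto. Qed.

Lemma seg_cfree c j m v : ~ In c m -> seg c j (m ++ v) = seg c j v.
Proof. induction m; simpl; intros H; auto.
 destruct (sym_eq_dec a c); [subst; tauto|]. auto. Qed.

Lemma seg_from_c c u w1 w2 : seg_from c (u ++ c :: w1) = seg_from c (u ++ c :: w2).
Proof. induction u; simpl. destruct (sym_eq_dec c c); congruence.
 destruct (sym_eq_dec a c); congruence. Qed.

Lemma frame_from c u m m' v : ~In c m -> ~In c m' ->
  seg_from c (u++m++v) = seg_from c (u++m'++v) \/
  exists u1 v1, seg_from c (u++m++v) = u1++m++v1 /\ seg_from c (u++m'++v) = u1++m'++v1.
Proof. intros Hm Hm'. induction u; simpl.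
 - right. exists [], (seg_from c v). rewrite !seg_from_cfree; auto.
 - destruct (sym_eq_dec a c). left; auto.
   destruct IHu as [E|(u1&v1&E1&E2)]. left; congruence.
   right; exists (a::u1), v1; rewrite E1, E2; auto. Qed.

Lemma frame c j u m m' v : ~In c m -> ~In c m' ->
  seg c j (u++m++v) = seg c j (u++m'++v) \/
  exists u1 v1, seg c j (u++m++v) = u1++m++v1 /\ seg c j (u++m'++v) = u1++m'++v1.
Proof. intros Hm Hm'. revert j; induction u; intros j; simpl.
 - left. rewrite !seg_cfree; auto.
 - destruct (sym_eq_dec a c).
   + destruct j. destruct (frame_from c u m m' v Hm Hm') as [E|(u1&v1&E1&E2)].
     left; congruence. right; exists (c::u1), v1; rewrite E1,E2; auto.
     apply IHu.
   + apply IHu. Qed.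

Lemma crule c j u l r v : ~In c l -> ~In c r ->
  (j = cnt c u /\ seg c j (u ++ (c :: l) ++ v) = c :: l ++ seg_from c v
     /\ seg c j (u ++ (c :: r) ++ v) = c :: r ++ seg_from c v)
  \/ (j <> cnt c u /\ seg c j (u ++ (c :: l) ++ v) = seg c j (u ++ (c :: r) ++ v)).
Proof. intros Hl Hr. revert j; induction u; intros j; unfold cnt in *; simpl in *.
 - destruct (sym_eq_dec c c); [|congruence]. destruct j.
   + left. rewrite !seg_from_cfree; auto.
   + right. split. lia. rewrite !seg_cfree; auto.
 - destruct (sym_eq_dec a c).
   + subst a. destruct j.
     * right. split. lia. f_equal. apply seg_from_c.
     * destruct (IHu j) as [(E&E1&E2)|(E&E1)]. left; split; [lia|auto]. right; split; [lia|auto].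
   + apply IHu.
Qed.

Definition goodS c (S:srs) := forall l r, S (l,r) -> (~In c l /\ ~In c r) \/
  exists l' r', l = c::l' /\ r = c::r' /\ ~In c l' /\ ~In c r'.
Definition goodR c (R S:srs) := forall l r, R (l,r) -> S (l,r) /\
  exists l' r', l = c::l' /\ r = c::r' /\ ~In c l' /\ ~In c r' /\ l' <> r'.

Lemma Sstep_seg c S s t j : goodS c S -> rstep S s t ->
  seg c j s = seg c j t \/ rstep S (seg c j s) (seg c j t).
Proof. intros HS (u&v&l&r&Hr&->&->). destruct (HS _ _ Hr) as [[Hl Hr']|(l'&r'&->&->&Hl&Hr')].
 - destruct (frame c j u l r v Hl Hr') as [E|(u1&v1&E1&E2)]; [left; auto|right].
   rewrite E1,E2. exists u1, v1, l, r; auto.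
 - destruct (crule c j u l' r' v Hl Hr') as [(_&E1&E2)|(_&E)]; [right|left; auto].
   rewrite E1, E2. exists [], (seg_from c v), (c::l'), (c::r'). simpl; auto.
Qed.

Lemma Rstep_seg c R S s t : goodR c R S -> rstep R s t ->
  exists j, j < cnt c s /\ topstep R (seg c j s) (seg c j t).
Proof. intros HR (u&v&l&r&Hr&->&->). destruct (HR _ _ Hr) as (_&l'&r'&El&Er&Hl&Hr'&_).
 subst l r.
 destruct (crule c (cnt c u) u l' r' v Hl Hr') as [(_&E1&E2)|(E&_)]; [|congruence].
 exists (cnt c u). split. unfold cnt; rewrite count_occ_app; simpl; destruct (sym_eq_dec c c); [lia|congruence].
 rewrite E1, E2. exists (seg_from c v), (c::l'), (c::r'). auto. Qed.

Lemma cnt_step c S s t : goodS c S -> rstep S s t -> cnt c s = cnt c t.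
Proof. intros HS (u&v&l&r&Hr&->&->). unfold cnt. rewrite !count_occ_app.
 destruct (HS _ _ Hr) as [[Hl Hr']|(l'&r'&->&->&Hl&Hr')].
 - rewrite (proj1 (count_occ_not_In _ _ _) Hl), (proj1 (count_occ_not_In _ _ _) Hr'). auto.
 - simpl. destruct sym_eq_dec; [|congruence].
   rewrite (proj1 (count_occ_not_In _ _ _) Hl), (proj1 (count_occ_not_In _ _ _) Hr'). auto.
Qed.

Lemma top_irrefl c R S x : goodR c R S -> ~ topstep R x x.
Proof. intros HR (v&l&r&Hr&E1&E2). destruct (HR _ _ Hr) as (_&l'&r'&El&Er&_&_&N).
 rewrite E1 in E2. apply app_inv_tail in E2. subst. congruence. Qed.

Lemma pig K (P : nat -> nat -> Prop) :
  (forall n, exists i, n <= i /\ exists j, j < K /\ P i j) ->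
  exists j, forall n, exists i, n <= i /\ P i j.
Proof. revert P; induction K; intros P H.
 - destruct (H 0) as (i&_&j&Hj&_). lia.
 - destruct (classic (forall n, exists i, n <= i /\ P i K)) as [Hy|Hn]; [eauto|].
   apply not_all_ex_not in Hn. destruct Hn as [N HN].
   destruct (IHK (fun i j => P (i + N) j)) as [j Hj].
   + intros n. destruct (H (n + N)) as (i&Hi&j&Hj&Hp).
     exists (i - N). split; [lia|]. exists j. split.
     * destruct (PeanoNat.Nat.eq_dec j K); [|lia]. subst. exfalso; apply HN. exists i; split; [lia|auto].
     * replace (i - N + N) with i by lia; auto.
   + exists j. intros n. destruct (Hj n) as (i&Hi&Hp). exists (i+N); split; [lia|auto].
Qed.

Lemma eq_range (g : nat -> word) i j : i <= j -> (forall k, i <= k < j -> g k = g (S k)) -> g i = g j.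
Proof. induction j; intros Hij H.
 - replace i with 0 by lia; auto.
 - destruct (PeanoNat.Nat.eq_dec i (S j)); [subst; auto|].
   rewrite IHj; [|lia|intros; apply H; lia]. apply H; lia. Qed.

Lemma compress (st1 st2 : word -> word -> Prop) (g : nat -> word) :
  (forall i, g i = g (S i) \/ st1 (g i) (g (S i)) \/ st2 (g i) (g (S i))) ->
  (forall n, exists i, n <= i /\ st1 (g i) (g (S i))) ->
  (forall x, ~ st1 x x) -> ~ rel_terminating st1 st2.
Proof. intros Hg Hinf Hirr Hterm.
 assert (Hex: forall d i, g (i+d) <> g (S (i+d)) -> exists j, i <= j /\ g j <> g (S j) /\
    (forall k, i <= k < j -> g k = g (S k))).
 { induction d; intros i Hd.
   - exists i. rewrite PeanoNat.Nat.add_0_r in Hd. split; [lia|split; auto]. intros; lia.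
   - destruct (classic (g i = g (S i))) as [E|E].
     + destruct (IHd (S i)) as (j&H1&H2&H3). replace (S i + d) with (i + S d) by lia; auto.
       exists j. split; [lia|split; auto]. intros k Hk.
       destruct (PeanoNat.Nat.eq_dec k i); [subst; auto|]. apply H3; lia.
     + exists i. split; [lia|split; auto]. intros; lia. }
 assert (Hn: forall i, {j | i <= j /\ g j <> g (S j) /\ (forall k, i <= k < j -> g k = g (S k))}).
 { intros i. apply constructive_indefinite_description.
   destruct (Hinf i) as (j&Hj&Hs). apply (Hex (j - i)). replace (i + (j - i)) with j by lia.
   intro E; rewrite E in Hs; apply (Hirr _ Hs). }
 set (nx := fun i => proj1_sig (Hn i)).
 assert (Nx1: forall i, i <= nx i /\ g (nx i) <> g (S (nx i))).
 { intros i; unfold nx; destruct (Hn i) as (j&?&?&?); simpl; auto. }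
 assert (Nx2: forall i, g i = g (nx i)).
 { intros i; unfold nx; destruct (Hn i) as (j&?&?&?); simpl. apply eq_range; auto. }
 assert (Nx3: forall a i, a <= i -> g i <> g (S i) -> nx a <= i).
 { intros a i Ha Hi; unfold nx; destruct (Hn a) as (j&?&?&H3); simpl.
   destruct (PeanoNat.Nat.le_gt_cases j i); auto. exfalso; apply Hi, H3; lia. }
 set (m := fix m n := match n with 0 => nx 0 | S n' => nx (S (m n')) end).
 assert (Mlt: forall n, m n < m (S n)). { intros n. simpl. pose proof (Nx1 (S (m n))). lia. }
 assert (Mmono: forall n n', n < n' -> m n < m n').
 { intros n n' H; induction H. apply Mlt. pose proof (Mlt m0). lia. }
 assert (Mge: forall n, n <= m n). { induction n. lia. pose proof (Mlt n). lia. }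
 apply Hterm. exists (fun n => g (m n)). split.
 - intros n. change (g (m (S n))) with (g (nx (S (m n)))). rewrite <- Nx2.
   destruct (Hg (m n)) as [E|H]; auto. exfalso.
   destruct n; simpl in E; apply (proj2 (Nx1 _)) in E; auto.
 - intros N. destruct (Hinf (m N)) as (i&Hi&Hs).
   assert (Hnid: g i <> g (S i)) by (intro E; rewrite E in Hs; apply (Hirr _ Hs)).
   assert (exists n, m n = i).
   { apply NNPP. intro Hno.
     assert (forall n, m n <= i).
     { induction n. simpl. apply Nx3; auto. lia.
       simpl. apply Nx3; auto. destruct (PeanoNat.Nat.eq_dec (m n) i).
       exfalso; apply Hno; eauto. lia. }
     specialize (H (S i)). specialize (Mge (S i)). lia. }
   destruct H as [n Hn']. exists n. split.
   + destruct (PeanoNat.Nat.le_gt_cases N n); auto. specialize (Mmono n N H). lia.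
   + change (g (m (S n))) with (g (nx (S (m n)))). rewrite <- Nx2. rewrite Hn'. auto.
Qed.

Lemma generic c R SS : goodS c SS -> goodR c R SS -> top_terminating_rel R SS -> terminating_rel R SS.
Proof. intros HS HR Htop [f [Hf Hinf]].
 assert (HSR: forall s t, rstep R s t -> rstep SS s t).
 { intros s t (u&v&l&r&H&->&->). exists u,v,l,r. split; auto. apply (HR _ _ H). }
 assert (Hc: forall i, cnt c (f i) = cnt c (f 0)).
 { induction i; auto. rewrite <- IHi. symmetry; apply (cnt_step c SS); auto. destruct (Hf i); auto. }
 destruct (pig (cnt c (f 0)) (fun i j => topstep R (seg c j (f i)) (seg c j (f (S i))))) as [j Hj].
 { intros n. destruct (Hinf n) as (i&Hi&Hr). destruct (Rstep_seg c R SS _ _ HR Hr) as (j&Hj&Ht).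
   exists i; split; auto. exists j; split; auto. rewrite <- (Hc i); auto. }
 apply (compress (topstep R) (rstep SS) (fun i => seg c j (f i))); auto.
 - intros i. assert (rstep SS (f i) (f (S i))) by (destruct (Hf i); auto).
   destruct (Sstep_seg c SS _ _ j HS H); auto.
 - intros x. apply (top_irrefl c R SS); auto.
Qed.

Ltac solve_rule :=
  first [ left; split; simpl; intuition discriminate
        | right; do 2 eexists; split; [reflexivity|split; [reflexivity|
            split; simpl; intuition discriminate]] ].

Ltac solve_rule2 := do 2 eexists; split; [reflexivity|split; [reflexivity|
            split; [simpl; intuition discriminate|split; [simpl; intuition discriminate|
              intro; discriminate]]]].

Theorem mainTheorem7 :
  (forall R : srs, subsrs R B_rules ->
     top_terminating_rel R T_rules -> terminating_rel R T_rules) /\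
  (forall Q : srs, subsrs Q D_T ->
     top_terminating_rel (rev_srs Q) (rev_srs T_rules) ->
     terminating_rel (rev_srs Q) (rev_srs T_rules)).
Proof. split.
 - intros R HRB. apply (generic lhd).
   + intros l r H. unfold T_rules, D_T, A_rules, B_rules in H.
     repeat destruct H as [H|H]; injection H as -> ->; solve_rule.
   + intros l r H. split. right; right; apply HRB, H.
     specialize (HRB _ H). unfold B_rules in HRB.
     repeat destruct HRB as [HRB|HRB]; injection HRB as -> ->;
       solve_rule2.
 - intros Q HQ. apply (generic rhd).
   + intros l r (l0&r0&H&E). injection E as -> ->. unfold T_rules, D_T, A_rules, B_rules in H.
     repeat destruct H as [H|H]; injection H as -> ->; simpl; solve_rule.
   + intros l r (l0&r0&H&E). injection E as -> ->. split. exists l0, r0; split; auto. left; apply HQ, H.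
     specialize (HQ _ H). unfold D_T in HQ.
     repeat destruct HQ as [HQ|HQ]; injection HQ as -> ->; simpl;
       solve_rule2.
Qed.
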